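(* Fix a positive integer $n$, a nonzero $n$-partition $\lambda$ with $\lambda_n=0$, an $n$-semistandard tableau $T$ of shape $\lambda$, a column $1\le l<\lambda_1$, and a location $(j,i)>(l,1)$ in reading order. If $1\le h<k\le c_l$, then the most recent value of $P(T;l,h)$ relative to $(j,i)$ is strictly smaller than the most recent value of $P(T;l,k)$ relative to $(j,i)$. (That is, the most recent value of $P(T;l,k)$ relative to $(j,i)$ decreases as $k$ decreases.)
   Context: Identify $\lambda=(\lambda_1,\dots,\lambda_n)$ (weakly decreasing nonnegative integers, $\lambda_n=0$, $\lambda\ne0$) with its Young diagram; $c_j$ is the length of column $j$; $(j,i)$ is the box in column $j$, row $i$. Reading order: $(l,k)\le(j,i)$ iff $l<j$, or $l=j$ and $k\ge i$. An $n$-semistandard tableau $T$ of shape $\lambda$ has entries in $[n]$, weakly increasing along rows, strictly increasing down columns; $T(j,i)$ is its entry. The EWIS of a sequence $x_1,x_2,\dots$ is $x_{a_1},x_{a_2},\dots$ with $a_1=1$ and $a_b$ the smallest index $>a_{b-1}$ with $x_{a_b}\ge x_{a_{b-1}}$. Scanning paths: for each column $l$ and $k=c_l,c_l-1,\dots,1$ in turn, delete the boxes of the previously computed $P(T;l,k')$, $k'>k$ (leaving a semistandard tableau of valid shape); form the sequence of entries in the lowest box of each of columns $l,\dots,\lambda_1$ of the current shape (skipping empty columns); $P(T;l,k)$ is the set of locations of the terms of its EWIS (it starts at $(l,k)$). For $(j,i)>(l,1)$, the most recent location of $P(T;l,k)$ relative to $(j,i)$ is the latest location (in reading order) of $P(T;l,k)$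 strictly before $(j,i)$, and the most recent value is the entry of $T$ there. *)

(* Defs.v *)
From mathcomp Require Import all_boot.
Set Implicit Arguments. Unset Strict Implicit. Unset Printing Implicit Defensive.

(* Conventions: a partition lam = (lam_1,...,lam_n) is a seq nat of size n,
   lam_i = nth 0 lam i.-1.  Boxes are (column, row) = (j, i), 1-indexed.
   A tableau is a function T : nat -> nat -> nat with T j i the entry in
   column j, row i; only its values on the boxes of lam matter. *)

Definition lam1 (lam : seq nat) : nat := head 0 lam.

Definition colht (lam : seq nat) (j : nat) : nat := count (fun x => j <= x) lam.

Definition box (lam : seq nat) (j i : nat) : bool :=
  (1 <= j <= lam1 lam) && (1 <= i <= colht lam j).

Definition is_sst (n : nat) (lam : seq nat) (T : nat -> nat -> nat) : Prop :=
  (forall j i, box lam j i -> 1 <= T j i <= n) /\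
  (forall j i, box lam j i -> box lam j.+1 i -> T j i <= T j.+1 i) /\
  (forall j i, box lam j i -> box lam j i.+1 -> T j i < T j i.+1).

(* reading order, strict: (l,k) < (j,i) iff l < j, or l = j and k > i *)
Definition rlt (p q : nat * nat) : bool :=
  (p.1 < q.1) || ((p.1 == q.1) && (q.2 < p.2)).

Fixpoint ewis_from (f : nat * nat -> nat) (cur : nat) (s : seq (nat * nat))
  : seq (nat * nat) :=
  match s with
  | [::] => [::]
  | p :: s' => if cur <= f p then p :: ewis_from f (f p) s' else ewis_from f cur s'
  end.

Definition ewis (f : nat * nat -> nat) (s : seq (nat * nat)) : seq (nat * nat) :=
  match s with
  | [::] => [::]
  | p :: s' => p :: ewis_from f (f p) s'
  end.

(* The current shape is recorded by the current column heights h j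
   (boxes of column j are rows 1..h j).  The sequence of lowest boxes of
   columns l,...,lam_1, skipping empty columns: *)
Definition lowest_seq (lam : seq nat) (l : nat) (h : nat -> nat) : seq (nat * nat) :=
  [seq (j, h j) | j <- iota l (lam1 lam - l + 1) & 0 < h j].

Definition spath (T : nat -> nat -> nat) (lam : seq nat) (l : nat) (h : nat -> nat)
  : seq (nat * nat) :=
  ewis (fun p => T p.1 p.2) (lowest_seq lam l h).

(* delete the boxes of a path (each is the lowest box of its column) *)
Definition remove_path (P : seq (nat * nat)) (h : nat -> nat) : nat -> nat :=
  fun j => if j \in [seq p.1 | p <- P] then (h j).-1 else h j.

(* current shape after computing the first t paths P(T;l,c_l),...,P(T;l,c_l-t+1) *)
Fixpoint heights (T : nat -> nat -> nat) (lam : seq nat) (l t : nat) : nat -> nat :=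
  match t with
  | 0 => colht lam
  | t'.+1 => let h := heights T lam l t' in remove_path (spath T lam l h) h
  end.

Definition scan_path (T : nat -> nat -> nat) (lam : seq nat) (l k : nat)
  : seq (nat * nat) :=
  spath T lam l (heights T lam l (colht lam l - k)).

Definition most_recent_loc (P : seq (nat * nat)) (q : nat * nat) : option (nat * nat) :=
  let s := [seq p <- P | rlt p q] in
  match s with
  | [::] => None
  | p0 :: _ => Some (foldl (fun a p => if rlt a p then p else a) p0 s)
  end.

(* Main.v *)
Require Import Defs.
From mathcomp Require Import all_boot.
From mathcomp Require Import zify.

Lemma rlt_trans : transitive rlt.
Proof. move=> [y1 y2] [x1 x2] [z1 z2]; rewrite /rlt /=; lia. Qed.

Lemma rlt_irr p : rlt p p = false.
Proof. case: p => a b; rewrite /rlt /=; lia. Qed.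

Lemma ewis_from_subseq f cur s : subseq (ewis_from f cur s) s.
Proof.
elim: s cur => //= x s IH cur; case: ifP => _.
  by rewrite eqxx.
apply: subseq_trans (IH cur) (subseq_cons s x).
Qed.

Lemma path_tail {a x s} : path rlt a (x :: s) -> path rlt a s.
Proof.
move=> Hp; have /= Ha := order_path_min rlt_trans Hp.
case/andP: Hp => _ Hs; rewrite path_min_sorted; first exact: path_sorted Hs.
by case/andP: Ha.
Qed.

Lemma filter_none (b : pred (nat*nat)) (s : seq (nat*nat)) :
  (forall y, y \in s -> ~~ b y) -> filter b s = [::].
Proof.
elim: s => //= x s IH H; rewrite (negbTE (H x (mem_head _ _))) IH // => y Hy.
by apply: H; rewrite inE Hy orbT.
Qed.

Lemma ewis_from_filter f {q s a} : path rlt a s -> rlt a q ->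
  exists t, filter (rlt^~ q) (a :: ewis_from f (f a) s) = a :: t /\
    f (last a t) = maxn (f a) (\max_(x <- s | rlt x q) f x).
Proof.
elim: s a => [|x s IH] a Hp Ha.
  by exists [::]; rewrite /= Ha big_nil maxn0.
rewrite /= big_cons.
case: leqP => Hle.
  case Hx: (rlt x q).
    have [t [Ht Hv]] := IH x (path_sorted Hp) Hx.
    exists (x :: t); rewrite Ha Ht; split => //=.
    rewrite Hv; lia.
  exists [::]; rewrite Ha; split => /=.
    congr (_ :: _); rewrite Hx; apply: filter_none => y Hy.
    have Hs := ewis_from_subseq f (f x) s.
    have Hy' := mem_subseq Hs Hy.
    have /allP Hall := order_path_min rlt_trans (path_sorted Hp).
    apply/negP => Hyq; move: (rlt_trans _ _ _ (Hall y Hy') Hyq); by rewrite Hx.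
  rewrite big_seq_cond big1 /= ?maxn0 // => y /andP[Hy Hyq].
  have /allP Hall := order_path_min rlt_trans (path_sorted Hp).
  by move: (rlt_trans _ _ _ (Hall y Hy) Hyq); rewrite Hx.
have [t [Ht Hv]] := IH a (path_tail Hp) Ha.
exists t; move: Ht; rewrite /= => ->; split => //; rewrite Hv; case: (rlt x q); lia.
Qed.

Lemma foldl_last a t :
  path rlt a t -> foldl (fun a p => if rlt a p then p else a) a t = last a t.
Proof. elim: t a => //= y t IH a /andP[-> Hp]; exact: IH. Qed.

Lemma mrl_ewis f {q a s} : path rlt a s -> rlt a q ->
  exists p, most_recent_loc (ewis f (a :: s)) q = Some p /\
    f p = \max_(x <- a :: s | rlt x q) f x.
Proof.
move=> Hp Ha; have [t [Ht Hv]] := ewis_from_filter f Hp Ha.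
exists (last a t).
have -> : ewis f (a :: s) = a :: ewis_from f (f a) s by [].
rewrite /most_recent_loc Ht /= rlt_irr foldl_last.
  by rewrite big_cons Ha.
have : sorted rlt (a :: t).
  rewrite -Ht; apply: (subseq_sorted rlt_trans (filter_subseq _ _)).
  apply: (subseq_sorted rlt_trans _ (Hp : sorted rlt (a :: s))).
  by rewrite /= eqxx ewis_from_subseq.
by [].
Qed.

Lemma ewis_skip f {s a p} : path rlt a s -> p \in s -> p \notin ewis_from f (f a) s ->
  exists y, [/\ rlt y p, f p < f y & (y == a) || (y \in s)].
Proof.
elim: s a => //= x s IH a Hp Hin.
case: leqP => Hle.
  rewrite inE negb_or => /andP[Hpx Hn].
  move: Hin; rewrite inE (negbTE Hpx) /= => Hin.
  have [y [H1 H2 H3]] := IH x (path_sorted (Hp : path rlt a (x :: s))) Hin Hn.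
  by exists y; split => //; rewrite inE; case/orP: H3 => ->; rewrite ?orbT.
move=> Hn; case/orP: Hin => [/eqP Epx|Hin].
  subst p; exists a; split => //; [by case/andP: Hp | by rewrite eqxx].
have [y [H1 H2 H3]] := IH a (path_tail (Hp : path rlt a (x :: s))) Hin Hn.
by exists y; split => //; rewrite inE; case/orP: H3 => ->; rewrite ?orbT.
Qed.

Lemma ewis_subseq f s : subseq (ewis f s) s.
Proof. case: s => //= a s; by rewrite eqxx ewis_from_subseq. Qed.

Definition Mv (T : nat -> nat -> nat) lam l (H : nat -> nat) q :=
  \max_(x <- lowest_seq lam l H | rlt x q) T x.1 x.2.

Lemma lowest_mem lam l H p : p \in lowest_seq lam l H ->
  exists x, [/\ p = (x, H x), l <= x < l + (lam1 lam - l + 1) & 0 < H x].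
Proof.
rewrite /lowest_seq => /mapP[x]; rewrite mem_filter mem_iota => /andP[Hp Hx] ->.
by exists x; split.
Qed.

Lemma lowest_mem2 lam l H x : l <= x < l + (lam1 lam - l + 1) -> 0 < H x ->
  (x, H x) \in lowest_seq lam l H.
Proof.
move=> Hx Hp; rewrite /lowest_seq; apply: (map_f (fun j => (j, H j))).
by rewrite mem_filter mem_iota Hp Hx.
Qed.

Lemma lowest_sorted lam l H : sorted rlt (lowest_seq lam l H).
Proof.
rewrite /lowest_seq sorted_map.
apply: (sub_sorted (e := ltn)); first by move=> a b /=; rewrite /rlt /= => ->.
apply: (sorted_filter ltn_trans); exact: iota_ltn_sorted.
Qed.

Lemma lowest_cons lam l H : 0 < H l -> lowest_seq lam l H =
  (l, H l) :: [seq (j, H j) | j <- iota l.+1 (lam1 lam - l) & 0 < H j].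
Proof. by move=> Hl; rewrite /lowest_seq addn1 /= Hl. Qed.

Lemma valI T lam l H q : 0 < H l -> l < q.1 ->
  exists p, most_recent_loc (spath T lam l H) q = Some p /\ T p.1 p.2 = Mv T lam l H q.
Proof.
move=> Hl Hq; rewrite /spath /Mv.
have Hs := lowest_sorted lam l H; rewrite lowest_cons // in Hs *.
apply: (mrl_ewis (fun p => T p.1 p.2) Hs).
by rewrite /rlt /= Hq.
Qed.

Lemma dom T lam l H q : 1 <= l <= lam1 lam -> (forall x, H x <= colht lam x) ->
  (forall j i, box lam j i -> box lam j i.+1 -> T j i < T j i.+1) ->
  0 < H l -> l < q.1 ->
  0 < remove_path (spath T lam l H) H l ->
  Mv T lam l (remove_path (spath T lam l H) H) q < Mv T lam l H q.
Proof.
move=> Hl Hb Hcol Hpl Hq Hpl'.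
set s1 := [seq (j, H j) | j <- iota l.+1 (lam1 lam - l) & 0 < H j].
have Hs : lowest_seq lam l H = (l, H l) :: s1 by rewrite lowest_cons.
have HP : spath T lam l H = (l, H l) :: ewis_from (fun p => T p.1 p.2) (T l (H l)) s1.
  by rewrite /spath Hs.
have Hsort : path rlt (l, H l) s1 by move: (lowest_sorted lam l H); rewrite Hs.
have key : forall x', x' \in lowest_seq lam l (remove_path (spath T lam l H) H) ->
    rlt x' q -> T x'.1 x'.2 < Mv T lam l H q.
  move=> x' /lowest_mem [x [-> Hx Hpos]] Hxq.
  case Hc: (x \in [seq p.1 | p <- spath T lam l H]).
    have HH' : remove_path (spath T lam l H) H x = (H x).-1 by rewrite /remove_path Hc.
    move: Hc => /mapP [p Hp Ex].
    have := mem_subseq (ewis_subseq _ _) Hp => /lowest_mem [z [Ep Hz Hzp]].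
    subst p; simpl in Ex; subst z.
    have Hin : (x, H x) \in lowest_seq lam l H by apply: lowest_mem2.
    have Hrq : rlt (x, H x) q.
      by move: Hxq; rewrite /rlt /= HH'; lia.
    apply: (leq_trans _ (leq_bigmax_seq (F := fun p => T p.1 p.2) (x, H x) Hin Hrq)).
    rewrite /= HH' -[X in _ < T x X](prednK Hzp).
    move: Hpos; rewrite HH' => Hpos.
    have Hbx := Hb x.
    have Hb1 : box lam x (H x).-1 by rewrite /box; apply/andP; split; apply/andP; split; lia.
    have Hb2 : box lam x (H x).-1.+1.
      by rewrite prednK // /box; apply/andP; split; apply/andP; split; lia.
    exact: Hcol Hb1 Hb2.
  have HH' : remove_path (spath T lam l H) H x = H x by rewrite /remove_path Hc.
  move: Hxq Hpos; rewrite HH' => Hxq Hpos.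
  have Hin : (x, H x) \in lowest_seq lam l H by apply: lowest_mem2.
  have Hnp : (x, H x) \notin spath T lam l H.
    apply/negP => Hm; move: Hc; by rewrite (map_f (fun p => p.1) Hm).
  move: Hin Hnp; rewrite Hs HP !inE !negb_or => /orP [/eqP Ex | Hin] /andP [Hne Hn].
    by rewrite Ex eqxx in Hne.
  have [y [Hy1 Hy2 Hy3]] := ewis_skip (fun p => T p.1 p.2) Hsort Hin Hn.
  have Hyin : y \in lowest_seq lam l H by rewrite Hs inE.
  have Hyq : rlt y q by apply: (rlt_trans _ _ _ Hy1 Hxq).
  exact: (leq_trans Hy2 (leq_bigmax_seq (F := fun p => T p.1 p.2) y Hyin Hyq)).
have Hl0 : (l, remove_path (spath T lam l H) H l) \in
    lowest_seq lam l (remove_path (spath T lam l H) H).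
  apply: lowest_mem2 => //; lia.
have Hl0q : rlt (l, remove_path (spath T lam l H) H l) q by rewrite /rlt /= Hq.
have := key _ Hl0 Hl0q => Hpos.
have : Mv T lam l (remove_path (spath T lam l H) H) q <= (Mv T lam l H q).-1.
  have Hk : forall y, y \in lowest_seq lam l (remove_path (spath T lam l H) H) ->
      rlt y q -> T y.1 y.2 <= (Mv T lam l H q).-1.
    move=> y Hy Hyq; have := key y Hy Hyq; lia.
  rewrite {1}/Mv; apply/bigmax_leqP_seq => y Hy Hyq; exact: Hk.
lia.
Qed.

Lemma heights_le T lam l t x : heights T lam l t x <= colht lam x.
Proof.
elim: t => //= t IH; rewrite /remove_path; case: ifP => // _.
exact: leq_trans (leq_pred _) IH.
Qed.

Lemma heights_l T lam l t : t <= colht lam l ->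
  heights T lam l t l = colht lam l - t.
Proof.
elim: t => [|t IH] Ht; first by rewrite subn0.
have IH' := IH (ltnW Ht).
rewrite /= /remove_path /spath lowest_cons; last by rewrite IH'; lia.
rewrite /= inE eqxx /= IH'; lia.
Qed.

Theorem lemma3p1 (n : nat) (lam : seq nat) (T : nat -> nat -> nat)
    (l j i h k : nat) :
  0 < n ->
  size lam = n ->
  sorted geq lam ->
  nth 0 lam n.-1 = 0 ->
  has (fun x => 0 < x) lam ->
  is_sst n lam T ->
  1 <= l < lam1 lam ->
  box lam j i ->
  rlt (l, 1) (j, i) ->
  1 <= h -> h < k -> k <= colht lam l ->
  exists p q : nat * nat,
    most_recent_loc (scan_path T lam l h) (j, i) = Some p /\
    most_recent_loc (scan_path T lam l k) (j, i) = Some q /\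
    T p.1 p.2 < T q.1 q.2.
Proof.
move=> _ _ _ _ _ [_ [_ Hcol]] Hl Hbox Hr Hh Hhk Hk.
have Hlj : l < j.
  move: Hbox Hr; rewrite /box /rlt /=; lia.
set c := colht lam l.
have Hpos t : t < c -> 0 < heights T lam l t l.
  by move=> Ht; rewrite heights_l ?subn_gt0 // ltnW.
have D t : t.+1 < c ->
    Mv T lam l (heights T lam l t.+1) (j, i) < Mv T lam l (heights T lam l t) (j, i).
  move=> Ht.
  have E : heights T lam l t.+1 =
     remove_path (spath T lam l (heights T lam l t)) (heights T lam l t) by [].
  rewrite E; apply: dom => //.
  - lia.
  - by move=> x; apply: heights_le.
  - by apply: Hpos; lia.
  - by rewrite -E; apply: Hpos.
have Dec t1 t2 : t1 < t2 < c ->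
    Mv T lam l (heights T lam l t2) (j, i) < Mv T lam l (heights T lam l t1) (j, i).
  elim: t2 => [|t2 IH]; first by lia.
  move=> Ht; case: (ltngtP t1 t2) => Ht12.
  - have := IH ltac:(lia); have := D t2 ltac:(lia); lia.
  - lia.
  - subst t2; apply: D; lia.
rewrite /scan_path -/c.
have Hkc : k <= c by [].
have [p [Hp1 Hp2]] := @valI T lam l (heights T lam l (c - h)) (j, i) (Hpos (c - h) ltac:(lia)) Hlj.
have [q [Hq1 Hq2]] := @valI T lam l (heights T lam l (c - k)) (j, i) (Hpos (c - k) ltac:(lia)) Hlj.
exists p, q; split => //; split => //.
rewrite Hp2 Hq2; apply: Dec; lia.
Qed.
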